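(* In the perishable-goods model described in the context, let $\hat v_1,\hat v_2,\dots$ and $K^*$ be defined as in the context, as functions of the parameters $(c,\lambda,\mu)$. Then for each $k\in\{2,\dots,K^*\}$, the threshold $\hat v_k$ is strictly increasing in $c$, strictly increasing in $\lambda$, and strictly decreasing in $\mu$. The threshold $\hat v_1$ (when $K^*\ge1$) is strictly increasing in $c$, strictly decreasing in $\mu$, and independent of $\lambda$.
   Context: Goods arrive by a Poisson process with rate $\mu>0$, buyers by an independent Poisson process with rate $\lambda>0$, buyer values are i.i.d. from $F$ on $[0,1]$ with density $f>0$, $f$ absolutely continuous, and $J(v)=v-\frac{1-F(v)}{f(v)}$ strictly increasing with $J(0)<0$; $c>0$ is the buyers' per-unit-time waiting cost. Let $\rho(v):=\lambda[1-F(v)]/\mu$. The thresholds (which are the admission thresholds of the revenue-optimal policy, under which a buyer ranked $k$-th in the queue is kept iff his value is at least $\hat v_k$) are defined recursively: $\hat v_1=J^{-1}(c/\mu)$ if $c/\mu<1$ and $\hat v_1=1$ otherwise; for $k\ge2$, if $\hat v_{k-1}<1$ and $\mu\int_{\hat v_{k-1}}^{1}\frac{J'(v)}{1+\rho(v)+\dots+\rho(v)^{k-1}}dv\ge c$, then $\hat v_k$ is the unique $x\in(\hat v_{k-1},1]$ with $\mu\int_{\hat v_{k-1}}^{x}\frac{J'(v)}{1+\rho(v)+\dots+\rho(v)^{k-1}}dv=c$; otherwise $\hat v_k=1$. $K^*$ is the number of indices $k$ with $\hat v_k<1$. Monotonicity in a parameter is understood while the other two parameters are held fixed and on parameter values for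 which the relevant index $k$ satisfies $k\le K^*$. *)

(* Defs.v *)
From HB Require Import structures.
From mathcomp Require Import all_boot all_order all_algebra.
From mathcomp Require Import all_classical all_reals all_analysis.
Set Implicit Arguments. Unset Strict Implicit. Unset Printing Implicit Defensive.
Import Order.TTheory GRing.Theory Num.Theory.
Local Open Scope classical_set_scope.
Local Open Scope ring_scope.

Definition abs_cont_on (R : realType) (a b : R) (g : R -> R) : Prop :=
  forall e : R, 0 < e -> exists2 d : R, 0 < d &
    forall (n : nat) (u w : 'I_n -> R),
      (forall i, a <= u i /\ u i <= w i /\ w i <= b) ->
      (forall i j, i != j -> w i <= u j \/ w j <= u i) ->
      \sum_(i < n) (w i - u i) < d ->
      \sum_(i < n) `|g (w i) - g (u i)| < e.

Definition Jfun (R : realType) (F f : R -> R) (v : R) : R :=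
  v - (1 - F v) / f v.

Definition rho (R : realType) (F : R -> R) (lam mu : R) (v : R) : R :=
  lam * (1 - F v) / mu.

Definition Jinv (R : realType) (F f : R -> R) (y : R) : R :=
  xget 0 [set x | 0 <= x <= 1 /\ Jfun F f x = y].

Definition thr_int (R : realType) (F f : R -> R) (lam mu : R) (k : nat)
    (a x : R) : \bar R :=
  (mu%:E * \int[lebesgue_measure]_(v in `[a, x])
      ((derive1 (Jfun F f) v) / (\sum_(i < k) (rho F lam mu v) ^+ i))%:E)%E.

Definition vstep (R : realType) (F f : R -> R) (c lam mu : R) (k : nat)
    (prev : R) : R :=
  if (prev < 1) && (c%:E <= thr_int F f lam mu k prev 1)%E
  then xget 1 [set x | prev < x <= 1 /\ thr_int F f lam mu k prev x = c%:E]
  else 1.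

(* thresholds vhat_k, k >= 1 (index 0 is unused) *)
Fixpoint vhat (R : realType) (F f : R -> R) (c lam mu : R) (k : nat) : R :=
  match k with
  | O => 0
  | S O => if c / mu < 1 then Jinv F f (c / mu) else 1
  | S k' => vstep F f c lam mu k (vhat F f c lam mu k')
  end.

Definition Kstar (R : realType) (F f : R -> R) (c lam mu : R) : nat :=
  (\sum_(k \in [set k : nat | (0 < k)%N /\ (vhat F f c lam mu k < 1)%R]) 1)%N.

(* Main.v *)
Require Import Defs.
From HB Require Import structures.
From mathcomp Require Import all_boot all_order all_algebra.
From mathcomp Require Import all_classical all_reals all_analysis.
Set Implicit Arguments. Unset Strict Implicit. Unset Printing Implicit Defensive.
Import Order.TTheory GRing.Theory Num.Theory.
From mathcomp Require Import measurable_realfun.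
From mathcomp Require Import ring lra.
Import numFieldNormedType.Exports.
Local Open Scope classical_set_scope.
Local Open Scope ring_scope.
Section IntLemmas.
Context d (T : measurableType d) (R : realType) (mu : {measure set T -> \bar R}).
Local Open Scope ereal_scope.

Lemma int_mono (D1 D2 : set T) (g1 g2 : T -> \bar R) :
  (forall x, D1 x -> 0 <= g1 x) -> (forall x, D2 x -> 0 <= g2 x) ->
  (forall x, D2 x -> D1 x /\ g2 x <= g1 x) ->
  \int[mu]_(x in D2) g2 x <= \int[mu]_(x in D1) g1 x.
Proof.
move=> g10 g20 H; rewrite (ge0_integralE mu g20) (ge0_integralE mu g10).
apply: ereal_sup_le => _ [h /= hle <-]; exists h => //= x.
apply: (le_trans (hle x)); rewrite /patch; case: ifPn => D2x.
  move: D2x; rewrite in_setE => /H[D1x le21].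
  by rewrite ifT ?in_setE.
by case: ifPn => //; rewrite in_setE => /g10.
Qed.

Lemma int_scale (D : set T) (g1 g2 : T -> \bar R) (th : R) : (0 < th)%R ->
  (forall x, D x -> 0 <= g1 x) -> (forall x, D x -> 0 <= g2 x) ->
  (forall x, D x -> th%:E * g2 x <= g1 x) ->
  th%:E * \int[mu]_(x in D) g2 x <= \int[mu]_(x in D) g1 x.
Proof.
move=> th0 g10 g20 H; rewrite (ge0_integralE mu g20) (ge0_integralE mu g10).
rewrite -ereal_sup_pZl//; apply: ge_ereal_sup => _ [_ [h /= hle <-] <-].
apply: ereal_sup_ubound => /=; exists (scale_nnsfun h (ltW th0)).
  move=> x /=; rewrite EFinM.
  apply: (@le_trans _ _ (th%:E * (g2 \_ D) x)).
    by apply: lee_wpmul2l => //; rewrite lee_fin ltW.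
  rewrite /patch; case: ifPn => [|_]; first by rewrite in_setE => /H.
  by rewrite mule0.
by rewrite sintegralrM.
Qed.
End IntLemmas.
Section VH.
Variables (R : realType) (F f : R -> R) (c lam mu : R).
Local Notation V := (vhat F f c lam mu).

Lemma Jinv_rng y : 0 <= Jinv F f y <= 1.
Proof. by rewrite /Jinv; case: xgetP => [x _ []|_]; rewrite ?lexx ?ler01. Qed.

Lemma vstep_rng k p : 0 <= p -> 0 <= vstep F f c lam mu k p <= 1.
Proof.
move=> p0; rewrite /vstep; case: ifP => _; last by rewrite ler01 lexx.
case: xgetP => [x _ [/andP[px x1] _]|_]; last by rewrite ler01 lexx.
by rewrite x1 (le_trans p0 (ltW px)).
Qed.

Lemma vhat_rng k : (0 < k)%N -> 0 <= V k <= 1.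
Proof.
case: k => // -[|k] _ /=; first by case: ifP => _; [exact: Jinv_rng|rewrite ler01 lexx].
elim: k => [|k IH] /=.
  apply: vstep_rng; by case: ifP => _; [case/andP: (Jinv_rng (c / mu))|rewrite ler01].
by apply: vstep_rng; case/andP: IH.
Qed.

Lemma vhat_step j : V j.+2 < 1 ->
  [/\ V j.+1 < 1, V j.+1 < V j.+2 &
      thr_int F f lam mu j.+2 (V j.+1) (V j.+2) = c%:E].
Proof.
rewrite [V j.+2]/= /vstep; case: ifP => [/andP[p1 _]|]; last by rewrite ltxx.
by case: xgetP => [x _ [/andP[px x1] thr]|_]; [|rewrite ltxx].
Qed.

Lemma vhat_up k : (0 < k)%N -> ~ (V k < 1) -> forall j, (k <= j)%N -> ~ (V j < 1).
Proof.
move=> k0 Vk j; elim: j => [|j IH]; first by rewrite leqn0 => /eqP k0'; rewrite k0' in k0.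
rewrite leq_eqVlt => /orP[/eqP <-//|]; rewrite ltnS => /IH{}IH.
case: j IH => [|j] IH; first by [].
by move/vhat_step => [].
Qed.

Lemma Kstar_lt1 k : (0 < k)%N -> (k <= Kstar F f c lam mu)%N -> V k < 1.
Proof.
move=> k0 kK; apply/negP => /negP nV; move: kK; apply/negP; rewrite -ltnNge.
have up := vhat_up k0 (elimN idP nV).
rewrite /Kstar fsbig_mkcond.
rewrite -(fsbig_widen `I_k setT); last 2 first.
- by [].
- move=> i [_ /= ik]; rewrite /patch; case: ifPn => //; rewrite in_setE => -[i0 Vi].
  by exfalso; apply: (up i) Vi; rewrite leqNgt; apply/negP.
rewrite -(@fsbig_ord _ 0%N addn k); case: k k0 {nV up} => // k _.
rewrite big_ord_recl /patch ifF; last by apply/negbTE; rewrite notin_setE => -[].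
rewrite /= Monoid.simpm ltnS.
apply: (@leq_trans (\sum_(i < k) 1)%N); last by rewrite sum1_card card_ord.
by apply: leq_sum => i _; case: ifP.
Qed.
Lemma vhat1 : V 1 < 1 -> c / mu < 1 /\ V 1 = Jinv F f (c / mu).
Proof. by rewrite /=; case: ifP => //; rewrite ltxx. Qed.
End VH.

Section Alg.
Variable R : realType.

Lemma psum_ge1 (r : R) k : 0 <= r -> (0 < k)%N -> 1 <= \sum_(i < k) r ^+ i.
Proof.
move=> r0; case: k => // k _; rewrite big_ord_recl expr0 lerDl.
by apply: sumr_ge0 => i _; exact: exprn_ge0.
Qed.

Lemma psum_mono (r s : R) k : 0 <= r -> r <= s -> \sum_(i < k) r ^+ i <= \sum_(i < k) s ^+ i.
Proof.
move=> r0 rs; apply: ler_sum => i _.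
by apply: lerXn2r => //; rewrite nnegrE // (le_trans r0 rs).
Qed.

Lemma psum_gap (r s : R) k : (1 < k)%N -> 0 <= r -> r <= s ->
  \sum_(i < k) r ^+ i + (s - r) <= \sum_(i < k) s ^+ i.
Proof.
move=> k1 r0 rs.
suff : s - r <= \sum_(i < k) (s ^+ i - r ^+ i) by rewrite sumrB lerBrDl.
rewrite (bigD1 (Ordinal k1)) //= !expr1 lerDl; apply: sumr_ge0 => i _.
by rewrite subr_ge0 lerXn2r // nnegrE // (le_trans r0 rs).
Qed.
End Alg.

Section AN.
Variables (R : realType) (F f : R -> R).
Hypothesis hf_pos : forall v, 0 <= v <= 1 -> 0 < f v.
Hypothesis hf_ac : abs_cont_on 0 1 f.

Lemma f_cont : {within `[0, 1], continuous f}.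
Proof.
apply/subspace_continuousP => x Dx; apply/cvgrPdist_lt => e e0.
have [d d0 Hd] := hf_ac e0.
rewrite near_withinE; apply/nbhs_ballP; exists d => //= t xt Dt.
move: Dx Dt; rewrite /= !in_itv /= => /andP[x0 x1] /andP[t0 t1].
have H u w : 0 <= u -> u <= w -> w <= 1 -> w - u < d -> `|f w - f u| < e.
  move=> u0 uw w1 wud; have := Hd 1%N (fun _ => u) (fun _ => w).
  rewrite !big_ord1; apply => //.
  by move=> i j; rewrite !ord1 eqxx.
move: xt; rewrite /ball /=.
case: (leP x t) => xt'.
  by rewrite distrC ger0_norm ?subr_ge0 // => ?; rewrite distrC; apply: H.
by rewrite ger0_norm ?subr_ge0 ?ltW // => ?; apply: H => //; rewrite ltW.
Qed.

Hypothesis hF : forall v, 0 <= v <= 1 ->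
          (F v)%:E = (\int[lebesgue_measure]_(t in `[0%R, v]) (f t)%:E)%E.
Hypothesis hF1 : F 1 = 1.

Lemma f_meas : measurable_fun (`[0%R, 1%R]%classic : set R) f.
Proof. by apply: subspace_continuous_measurable_fun => //; exact: f_cont. Qed.

Lemma F_mono u w : 0 <= u -> u <= w -> w <= 1 -> F u <= F w.
Proof.
move=> u0 uw w1; rewrite -lee_fin hF ?u0 ?(le_trans uw w1) // hF ?w1 ?(le_trans u0 uw) //.
apply: int_mono.
- move=> t; rewrite /= in_itv /= => /andP[t0 tw]; rewrite lee_fin ltW // hf_pos // t0.
  exact: le_trans tw w1.
- move=> t; rewrite /= in_itv /= => /andP[t0 tw]; rewrite lee_fin ltW // hf_pos // t0.
  exact: le_trans tw (le_trans uw w1).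
- move=> t; rewrite /= !in_itv /= => /andP[t0 tu]; rewrite t0 (le_trans tu uw); split => //.
Qed.

Lemma F_ge0 v : 0 <= v <= 1 -> 0 <= F v.
Proof.
move=> /andP[v0 v1]; rewrite -lee_fin hF ?v0 ?v1 //; apply: integral_ge0.
move=> t; rewrite /= in_itv /= => /andP[t0 tv]; rewrite lee_fin ltW // hf_pos // t0.
exact: le_trans tv v1.
Qed.

Lemma F_le1 v : 0 <= v <= 1 -> F v <= 1.
Proof. by move=> /andP[v0 v1]; rewrite -hF1; apply: F_mono. Qed.

Lemma F_lt1 x : 0 <= x -> x < 1 -> F x < 1.
Proof.
move=> x0 x1.
have [c0 c01 cmin] := EVT_min ler01 f_cont.
have m0 : 0 < f c0 by apply: hf_pos; move: c01; rewrite in_itv.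
have E : `[0%R, 1%R]%classic = `[0%R, x] `|` `]x, 1%R].
  apply/seteqP; split => y /=; rewrite !in_itv /=.
    by move=> /andP[y0 y1]; case: (leP y x) => yx; [left|right]; rewrite ?y0 ?yx ?y1.
  case=> /andP[y0 y1]; rewrite ?y0 ?(le_trans y1 (ltW x1)) //.
  by rewrite (le_trans x0 (ltW y0)) y1.
have dj : [disjoint `[0%R, x]%classic & `]x, 1%R]].
  apply/disj_setPS => y [/=]; rewrite !in_itv /= => /andP[_ yx] /andP[xy _].
  by move: (lt_le_trans xy yx); rewrite ltxx.
have := hF (v := 1); rewrite hF1 ler01 lexx => /(_ isT).
rewrite E ge0_integral_setU //; first last.
- by rewrite -E => y; rewrite /= in_itv /= => Hy; rewrite lee_fin ltW // hf_pos.
- by rewrite -E; apply/measurable_EFinP; exact: f_meas.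
rewrite -hF ?x0 ?(ltW x1) //.
have : ((f c0 * (1 - x))%:E <= \int[lebesgue_measure]_(t in `]x, 1%R]) (f t)%:E)%E.
  have := @integral_cst _ _ _ lebesgue_measure `]x, 1%R]%classic _ (f c0)%:E.
  move=> /(_ (measurable_itv _)).
  have LM : lebesgue_measure (`]x, 1%R]%classic : set R) = (1 - x)%:E.
    by have := lebesgue_measure_itv `]x, 1%R]; rewrite /= lte_fin x1 -EFinD; apply.
  move=> H.
  apply: (@le_trans _ _ (\int[lebesgue_measure]_(t in `]x, 1%R]) (cst (f c0)%:E t))%E).
    by rewrite H; move: LM => /= ->; rewrite EFinM.
  have Hin y : y \in `]x, 1%R] -> 0 <= y <= 1.
    by rewrite in_itv /= => /andP[xy ->]; rewrite (le_trans x0 (ltW xy)).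
  apply: int_mono.
  - by move=> y /= /Hin Hy; rewrite lee_fin ltW // hf_pos.
  - by move=> y _; rewrite lee_fin ltW.
  - move=> y /= Hy; split => //; rewrite lee_fin; apply: cmin.
    by rewrite in_itv /=; apply: Hin.
move=> HI E1; have : ((F x)%:E + (f c0 * (1 - x))%:E <= 1%:E)%E.
  by rewrite E1 leeD2l.
rewrite -EFinD lee_fin => H; apply: lt_le_trans H.
by rewrite ltrDl mulr_gt0 // subr_gt0.
Qed.

Lemma f_int : lebesgue_measure.-integrable `[0%R, 1%R] (EFin \o f).
Proof.
apply/integrableP; split; first by apply/measurable_EFinP; exact: f_meas.
under eq_integral.
  move=> y; rewrite inE /= in_itv /= => Hy.
  rewrite /= gtr0_norm; last by rewrite hf_pos.
  over.
by rewrite /= -hF ?ler01 ?lexx // ltry.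
Qed.

Definition G x := parameterized_integral lebesgue_measure 0 x f.

Lemma G_F x : 0 <= x <= 1 -> G x = F x.
Proof. by move=> Hx; rewrite /G /parameterized_integral /Rintegral -hF. Qed.

Lemma G_cont : {within `[0%R, 1%R], continuous G}.
Proof. exact: (parameterized_integral_continuous ler01 f_int). Qed.

Lemma J_cont : {within `[0%R, 1%R], continuous (Jfun F f)}.
Proof.
apply: (@subspace_eq_continuous _ _ _ (fun v => v - (1 - G v) / f v)).
  move=> v; rewrite inE /= => Hv; rewrite /Jfun G_F //.
apply/subspace_continuousP => x Hx.
have cG := (iffLR (subspace_continuousP _ _) G_cont x Hx).
have cf := (iffLR (subspace_continuousP _ _) f_cont x Hx).
have fx0 : f x != 0 by rewrite gt_eqF // hf_pos //; move: Hx; rewrite /= in_itv.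
apply: cvgB; first exact: cvg_within.
apply: cvgM; first by apply: cvgB => //; exact: cvg_cst.
exact: cvgV.
Qed.

Hypothesis hJ_incr : forall x y, 0 <= x -> x < y -> y <= 1 -> Jfun F f x < Jfun F f y.
Hypothesis hJ0 : Jfun F f 0 < 0.

Lemma J1 : Jfun F f 1 = 1.
Proof. by rewrite /Jfun hF1 subrr mul0r subr0. Qed.

Lemma Jinv_spec y : 0 < y <= 1 -> (0 <= Jinv F f y <= 1) /\ Jfun F f (Jinv F f y) = y.
Proof.
move=> /andP[y0 y1].
suff : [set x | 0 <= x <= 1 /\ Jfun F f x = y] (Jinv F f y) by [].
rewrite /Jinv; apply: xgetPex.
have [|c cin Jc] := IVT ler01 J_cont (v := y).
  rewrite J1; apply/andP; split.
    by rewrite ge_min (ltW (lt_trans hJ0 y0)).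
  by rewrite le_max y1 orbT.
by exists c; split => //; move: cin; rewrite in_itv.
Qed.

Lemma J_le x y : 0 <= x -> x <= y -> y <= 1 -> Jfun F f x <= Jfun F f y.
Proof.
move=> x0; rewrite le_eqVlt => /orP[/eqP -> //|xy] y1.
exact/ltW/hJ_incr.
Qed.

Lemma Jinv_lt y1 y2 : 0 < y1 -> y1 < y2 -> y2 <= 1 -> Jinv F f y1 < Jinv F f y2.
Proof.
move=> y10 y12 y21.
have [|/andP[a0 a1] Ja] := Jinv_spec (y := y1).
  by rewrite y10 (ltW (lt_le_trans y12 y21)).
have [|/andP[b0 b1] Jb] := Jinv_spec (y := y2).
  by rewrite (lt_trans y10 y12) y21.
rewrite ltNge; apply/negP => ba.
by move: (J_le b0 ba a1); rewrite Ja Jb leNgt y12.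
Qed.

Lemma Jinv_lt1 y : 0 < y -> y < 1 -> Jinv F f y < 1.
Proof.
move=> y0 y1; have [|/andP[a0 a1] Ja] := Jinv_spec (y := y).
  by rewrite y0 ltW.
rewrite lt_neqAle a1 andbT; apply/eqP => a1'.
by move: Ja; rewrite a1' J1 => y1'; rewrite y1' ltxx in y1.
Qed.

Lemma dJ_ge0 v : 0 <= v <= 1 -> 0 <= derive1 (Jfun F f) v.
Proof.
move=> /andP[v0 v1]; rewrite /derive1 /lim /lim_in.
case: xgetP => [l _ Hl | _]; last by [].
case: (ltP v 1) => [vlt1 | v1'].
- have Hr : (fun h => h^-1 *: (Jfun F f (h + v) - Jfun F f v)) @ 0^'+ --> l.
    have sub : (0:R)^'+ `=>` (0:R)^'.
      move=> P [e /= e0 He]; exists e => // h /He Hh h0; apply: Hh.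
      by rewrite gt_eqF.
    exact: cvg_trans (cvg_app _ sub) Hl.
  apply: (cvgr_to_ge Hr).
  have d0 : 0 < 1 - v by rewrite subr_gt0.
  near=> h.
  have h0 : 0 < h by near: h; exact: nbhs_right_gt.
  have h1 : h < 1 - v by near: h; exact: nbhs_right_lt.
  apply: mulr_ge0; first by rewrite invr_ge0 ltW.
  rewrite subr_ge0; apply: J_le => //; first by rewrite lerDr ltW.
  by rewrite -lerBrDr ltW.
- have v1e : v = 1 by apply/eqP; rewrite eq_le v1 v1'.
  have Hr : (fun h => h^-1 *: (Jfun F f (h + v) - Jfun F f v)) @ 0^'- --> l.
    have sub : (0:R)^'- `=>` (0:R)^'.
      move=> P [e /= e0 He]; exists e => // h /He Hh h0; apply: Hh.
      by rewrite lt_eqF.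
    exact: cvg_trans (cvg_app _ sub) Hl.
  apply: (cvgr_to_ge Hr).
  near=> h.
  have h0 : h < 0 by near: h; exact: nbhs_left_lt.
  have h1 : -1 < h by near: h; exact: nbhs_left_gt.
  apply: mulr_le0; first by rewrite invr_le0 ltW.
  rewrite subr_le0; apply: J_le => //; last by rewrite gerDr ltW.
  by rewrite v1e -lerBlDr sub0r ltW.
Unshelve. all: by end_near.
Qed.

Lemma thr_eq (I : \bar R) (m c : R) : 0 < m -> (m%:E * I = c%:E)%E -> I = (c / m)%:E.
Proof.
move=> m0; case: I => [r| |] /=.
- move=> H; have E : m * r = c by apply: EFin_inj; rewrite EFinM.
  by rewrite -E [m * r]mulrC mulfK // gt_eqF.
- by rewrite gt0_muley ?lte_fin.
- by rewrite gt0_muleNy ?lte_fin.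
Qed.

Definition ig lam mu k v : R :=
  derive1 (Jfun F f) v / \sum_(i < k) (rho F lam mu v) ^+ i.

Lemma rho_ge0 lam mu v : 0 <= lam -> 0 < mu -> 0 <= v <= 1 -> 0 <= rho F lam mu v.
Proof.
move=> l0 m0 Hv; rewrite /rho mulr_ge0 ?invr_ge0 ?(ltW m0) // mulr_ge0 //.
by rewrite subr_ge0 F_le1.
Qed.

Lemma ig_ge0 lam mu k v : 0 <= lam -> 0 < mu -> (0 < k)%N -> 0 <= v <= 1 ->
  0 <= ig lam mu k v.
Proof.
move=> l0 m0 k0 Hv; rewrite /ig divr_ge0 ?dJ_ge0 //.
exact: le_trans ler01 (psum_ge1 (rho_ge0 l0 m0 Hv) k0).
Qed.

Lemma thrE lam mu k a x : thr_int F f lam mu k a x =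
  (mu%:E * \int[lebesgue_measure]_(v in `[a, x]) (ig lam mu k v)%:E)%E.
Proof. by []. Qed.

Lemma step_c lam mu k a1 x1 a2 x2 c1 c2 : 0 < lam -> 0 < mu -> (0 < k)%N ->
  0 <= a1 -> a1 <= a2 -> x2 <= x1 -> x1 <= 1 ->
  thr_int F f lam mu k a2 x2 = c2%:E -> thr_int F f lam mu k a1 x1 = c1%:E -> c2 <= c1.
Proof.
move=> l0 m0 k0 a10 a12 x21 x11; rewrite /thr_int => /(thr_eq m0) E2 /(thr_eq m0) E1.
suff : ((c2 / mu)%:E <= (c1 / mu)%:E)%E by rewrite lee_fin ler_pM2r ?invr_gt0.
have igD v : 0 <= v <= 1 -> (0 <= (ig lam mu k v)%:E)%E.
  by move=> Hv; rewrite lee_fin ig_ge0 // ltW.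
rewrite -E1 -E2; apply: int_mono.
- move=> v; rewrite /= in_itv /= => /andP[av vx]; apply: igD.
  rewrite (le_trans a10 av) /=; exact: le_trans vx x11.
- move=> v; rewrite /= in_itv /= => /andP[av vx]; apply: igD.
  rewrite (le_trans a10 (le_trans a12 av)) /=.
  exact: le_trans vx (le_trans x21 x11).
- move=> v; rewrite /= !in_itv /= => /andP[av vx]; split => //.
  by rewrite (le_trans a12 av) (le_trans vx x21).
Qed.

Lemma psumP lam mu k v : 0 <= lam -> 0 < mu -> (0 < k)%N -> 0 <= v <= 1 ->
  0 < \sum_(i < k) (rho F lam mu v) ^+ i.
Proof.
move=> l0 m0 k0 Hv; exact: lt_le_trans ltr01 (psum_ge1 (rho_ge0 l0 m0 Hv) k0).
Qed.

Lemma step_mu lam mu1 mu2 k a1 x1 a2 x2 c : 0 < lam -> 0 < mu1 -> mu1 < mu2 ->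
  (0 < k)%N -> 0 < c ->
  0 <= a2 -> a2 <= a1 -> x1 <= x2 -> x2 <= 1 ->
  thr_int F f lam mu1 k a1 x1 = c%:E -> thr_int F f lam mu2 k a2 x2 = c%:E -> False.
Proof.
move=> l0 m10 m12 k0 c0 a20 a21 x12 x21.
have m20 : 0 < mu2 := lt_trans m10 m12.
rewrite /thr_int => /(thr_eq m10) E1 /(thr_eq m20) E2.
suff : ((c / mu1)%:E <= (c / mu2)%:E)%E.
  rewrite lee_fin ler_pM2l // lef_pV2 ?posrE //.
  by rewrite leNgt m12.
have igD lm v : 0 < lm -> 0 <= v <= 1 -> (0 <= (ig lam lm k v)%:E)%E.
  by move=> ? Hv; rewrite lee_fin ig_ge0 // ltW.
rewrite -E1 -E2; apply: int_mono.
- move=> v; rewrite /= in_itv /= => /andP[av vx]; apply: igD => //.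
  rewrite (le_trans a20 av) /=; exact: le_trans vx x21.
- move=> v; rewrite /= in_itv /= => /andP[av vx]; apply: igD => //.
  rewrite (le_trans a20 (le_trans a21 av)) /=.
  exact: le_trans vx (le_trans x12 x21).
- move=> v; rewrite /= !in_itv /= => /andP[av vx].
  have Hv : 0 <= v <= 1.
    by rewrite (le_trans a20 (le_trans a21 av)) (le_trans vx (le_trans x12 x21)).
  split; first by rewrite (le_trans a21 av) (le_trans vx x12).
  rewrite lee_fin /ig; apply: ler_wpM2l; first exact: dJ_ge0.
  rewrite lef_pV2 ?posrE ?psumP // ?(ltW l0) //.
  apply: psum_mono; first by apply: rho_ge0 => //; rewrite ltW.
  rewrite /rho ler_wpM2l ?lef_pV2 ?posrE ?(ltW m12) //.
  by rewrite mulr_ge0 ?(ltW l0) // subr_ge0 F_le1.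
Qed.

Lemma step_lam lam1 lam2 mu k a1 x1 a2 x2 c : 0 < lam1 -> lam1 < lam2 -> 0 < mu ->
  (1 < k)%N -> 0 < c ->
  0 <= a1 -> a1 <= a2 -> x2 <= x1 -> 0 <= x1 -> x1 < 1 ->
  thr_int F f lam1 mu k a1 x1 = c%:E -> thr_int F f lam2 mu k a2 x2 = c%:E -> False.
Proof.
move=> l10 l12 m0 k1 c0 a10 a12 x21 x10 x11.
have k0 : (0 < k)%N by apply: leq_trans k1.
have l20 : 0 < lam2 := lt_trans l10 l12.
rewrite /thr_int => /(thr_eq m0) E1 /(thr_eq m0) E2.
have Fx1 := F_lt1 x10 x11.
set eta := (lam2 - lam1) * (1 - F x1) / mu.
have eta0 : 0 < eta by rewrite /eta !mulr_gt0 ?invr_gt0 ?subr_gt0.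
set Q := \sum_(i < k) (lam1 / mu) ^+ i.
have Q1 : 1 <= Q by apply: psum_ge1 => //; rewrite divr_ge0 ?ltW.
set th := 1 + eta / Q.
have th1 : 1 < th by rewrite /th ltrDl divr_gt0 // (lt_le_trans ltr01 Q1).
have igD lm v : 0 < lm -> 0 <= v <= 1 -> (0 <= (ig lm mu k v)%:E)%E.
  by move=> ? Hv; rewrite lee_fin ig_ge0 // ltW.
have H1 : (th%:E * \int[lebesgue_measure]_(v in `[a2, x2]) (ig lam2 mu k v)%:E <=
          \int[lebesgue_measure]_(v in `[a2, x2]) (ig lam1 mu k v)%:E)%E.
  apply: int_scale; first exact: lt_trans ltr01 th1.
  - move=> v; rewrite /= in_itv /= => /andP[av vx]; apply: igD => //.
    rewrite (le_trans a10 (le_trans a12 av)) /=.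
    exact: le_trans vx (le_trans x21 (ltW x11)).
  - move=> v; rewrite /= in_itv /= => /andP[av vx]; apply: igD => //.
    rewrite (le_trans a10 (le_trans a12 av)) /=.
    exact: le_trans vx (le_trans x21 (ltW x11)).
  move=> v; rewrite /= in_itv /= => /andP[av vx].
  have v0 : 0 <= v := le_trans a10 (le_trans a12 av).
  have vx1 : v <= x1 := le_trans vx x21.
  have Hv : 0 <= v <= 1 by rewrite v0 (le_trans vx1 (ltW x11)).
  rewrite -EFinM lee_fin /ig.
  set d := derive1 (Jfun F f) v.
  have d0 : 0 <= d := dJ_ge0 Hv.
  set r1 := rho F lam1 mu v; set r2 := rho F lam2 mu v.
  have r10 : 0 <= r1 by apply: rho_ge0 => //; rewrite ltW.
  have Fv0 := F_ge0 Hv.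
  have Fvx := F_mono v0 vx1 (ltW x11).
  have r1Q : r1 <= lam1 / mu.
    rewrite /r1 /rho ler_wpM2r ?invr_ge0 ?(ltW m0) //.
    by rewrite ger_pMr // lerBlDr lerDl.
  have r12 : r1 + eta <= r2.
    rewrite /r1 /r2 /rho /eta.
    have mi : 0 < mu^-1 by rewrite invr_gt0.
    have : 0 <= (lam2 - lam1) * mu^-1 * (F x1 - F v).
      by rewrite !mulr_ge0 ?subr_ge0 // ?ltW.
    nra.
  set P1 := \sum_(i < k) r1 ^+ i; set P2 := \sum_(i < k) r2 ^+ i.
  have P11 : 1 <= P1 by apply: psum_ge1.
  have P1Q : P1 <= Q by apply: psum_mono.
  have P12 : P1 + eta <= P2.
    apply: le_trans (psum_gap k1 r10 _); last by apply: le_trans r12; rewrite lerDl ltW.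
    by rewrite lerD2l lerBrDl.
  have key : th * P1 <= P2.
    have : eta / Q * P1 <= eta.
      rewrite -mulrA ger_pMr // ler_pdivrMl ?(lt_le_trans ltr01 Q1) //.
      by rewrite mulr1.
    rewrite /th; nra.
  have P10 : 0 < P1 := lt_le_trans ltr01 P11.
  have P20 : 0 < P2 by apply: lt_le_trans P12; rewrite addr_gt0.
  rewrite mulrCA; apply: ler_wpM2l => //.
  by rewrite ler_pdivrMr // mulrC ler_pdivlMr.
have H2 : (\int[lebesgue_measure]_(v in `[a2, x2]) (ig lam1 mu k v)%:E <=
          \int[lebesgue_measure]_(v in `[a1, x1]) (ig lam1 mu k v)%:E)%E.
  apply: int_mono.
  - move=> v; rewrite /= in_itv /= => /andP[av vx]; apply: igD => //.
    rewrite (le_trans a10 av) /=; exact: le_trans vx (ltW x11).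
  - move=> v; rewrite /= in_itv /= => /andP[av vx]; apply: igD => //.
    rewrite (le_trans a10 (le_trans a12 av)) /=.
    exact: le_trans vx (le_trans x21 (ltW x11)).
  move=> v; rewrite /= !in_itv /= => /andP[av vx]; split => //.
  by rewrite (le_trans a12 av) (le_trans vx x21).
have := le_trans H1 H2; rewrite E1 E2 -EFinM lee_fin.
have cm : 0 < c / mu by rewrite divr_gt0.
nra.
Qed.

Local Notation VV := (vhat F f).

Lemma ind_c lam mu c1 c2 : 0 < c1 -> c1 < c2 -> 0 < lam -> 0 < mu ->
  forall j, (0 < j)%N -> VV c1 lam mu j < 1 -> VV c2 lam mu j < 1 ->
  VV c1 lam mu j < VV c2 lam mu j.
Proof.
move=> c10 c12 l0 m0; elim=> [//|j IH] _ V1 V2.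
case: j IH V1 V2 => [_|j IH] V1 V2.
  have [h1 ->] := vhat1 V1; have [h2 ->] := vhat1 V2.
  apply: Jinv_lt; rewrite ?divr_gt0 ?ltr_pM2r ?invr_gt0 // ltW //.
have [p1 lt1 th1] := vhat_step V1; have [p2 lt2 th2] := vhat_step V2.
have IH' := IH isT p1 p2.
rewrite ltNge; apply/negP => H.
have r1 := vhat_rng F f c1 lam mu (ltn0Sn j.+1).
have r1' := vhat_rng F f c1 lam mu (ltn0Sn j).
case/andP: r1 => _ x11; case/andP: r1' => a10 _.
have := step_c l0 m0 (ltn0Sn j.+1) a10 (ltW IH') H x11 th2 th1.
by rewrite leNgt c12.
Qed.

Lemma ind_mu lam mu1 mu2 c : 0 < c -> 0 < lam -> 0 < mu1 -> mu1 < mu2 ->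
  forall j, (0 < j)%N -> VV c lam mu1 j < 1 -> VV c lam mu2 j < 1 ->
  VV c lam mu2 j < VV c lam mu1 j.
Proof.
move=> c0 l0 m10 m12; have m20 := lt_trans m10 m12.
elim=> [//|j IH] _ V1 V2.
case: j IH V1 V2 => [_|j IH] V1 V2.
  have [h1 ->] := vhat1 V1; have [h2 ->] := vhat1 V2.
  apply: Jinv_lt; rewrite ?divr_gt0 ?ltr_pM2l ?ltf_pV2 ?posrE // ltW //.
have [p1 lt1 th1] := vhat_step V1; have [p2 lt2 th2] := vhat_step V2.
have IH' := IH isT p1 p2.
rewrite ltNge; apply/negP => H.
have r2 := vhat_rng F f c lam mu2 (ltn0Sn j.+1).
have r2' := vhat_rng F f c lam mu2 (ltn0Sn j).
case/andP: r2 => _ x21; case/andP: r2' => a20 _.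
exact: (step_mu l0 m10 m12 (ltn0Sn j.+1) c0 a20 (ltW IH') H x21 th1 th2).
Qed.

Lemma ind_lam lam1 lam2 mu c : 0 < c -> 0 < lam1 -> lam1 < lam2 -> 0 < mu ->
  forall j, (0 < j)%N -> VV c lam1 mu j < 1 -> VV c lam2 mu j < 1 ->
  VV c lam1 mu j <= VV c lam2 mu j /\ ((1 < j)%N -> VV c lam1 mu j < VV c lam2 mu j).
Proof.
move=> c0 l10 l12 m0.
elim=> [//|j IH] _ V1 V2.
case: j IH V1 V2 => [_|j IH] V1 V2.
  by split => //; rewrite /= lexx.
have [p1 lt1 th1] := vhat_step V1; have [p2 lt2 th2] := vhat_step V2.
have [IH' _] := IH isT p1 p2.
suff S : VV c lam1 mu j.+2 < VV c lam2 mu j.+2 by split => //; apply: ltW.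
rewrite ltNge; apply/negP => H.
have r1 := vhat_rng F f c lam1 mu (ltn0Sn j.+1).
have r1' := vhat_rng F f c lam1 mu (ltn0Sn j).
case/andP: r1 => x10 _; case/andP: r1' => a10 _.
exact: (step_lam l10 l12 m0 (isT : (1 < j.+2)%N) c0 a10 IH' H x10 V1 th1 th2).
Qed.

Lemma main_result : 
  (forall k : nat, (2 <= k)%N ->
     (forall c1 c2 lam mu, 0 < c1 -> c1 < c2 -> 0 < lam -> 0 < mu ->
        (k <= Kstar F f c1 lam mu)%N -> (k <= Kstar F f c2 lam mu)%N ->
        vhat F f c1 lam mu k < vhat F f c2 lam mu k)
  /\ (forall c lam1 lam2 mu, 0 < c -> 0 < lam1 -> lam1 < lam2 -> 0 < mu ->
        (k <= Kstar F f c lam1 mu)%N -> (k <= Kstar F f c lam2 mu)%N ->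
        vhat F f c lam1 mu k < vhat F f c lam2 mu k)
  /\ (forall c lam mu1 mu2, 0 < c -> 0 < lam -> 0 < mu1 -> mu1 < mu2 ->
        (k <= Kstar F f c lam mu1)%N -> (k <= Kstar F f c lam mu2)%N ->
        vhat F f c lam mu2 k < vhat F f c lam mu1 k))
  /\
  ((forall c1 c2 lam mu, 0 < c1 -> c1 < c2 -> 0 < lam -> 0 < mu ->
        (1 <= Kstar F f c1 lam mu)%N -> (1 <= Kstar F f c2 lam mu)%N ->
        vhat F f c1 lam mu 1 < vhat F f c2 lam mu 1)
  /\ (forall c lam mu1 mu2, 0 < c -> 0 < lam -> 0 < mu1 -> mu1 < mu2 ->
        (1 <= Kstar F f c lam mu1)%N -> (1 <= Kstar F f c lam mu2)%N ->
        vhat F f c lam mu2 1 < vhat F f c lam mu1 1)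
  /\ (forall c lam1 lam2 mu, 0 < c -> 0 < lam1 -> 0 < lam2 -> 0 < mu ->
        (1 <= Kstar F f c lam1 mu)%N -> (1 <= Kstar F f c lam2 mu)%N ->
        vhat F f c lam1 mu 1 = vhat F f c lam2 mu 1)).
Proof.
split.
  move=> k k2; have k0 : (0 < k)%N by apply: ltn_trans k2.
  split; [|split].
  - move=> c1 c2 lam mu c10 c12 l0 m0 K1 K2.
    exact: ind_c c10 c12 l0 m0 k k0 (Kstar_lt1 k0 K1) (Kstar_lt1 k0 K2).
  - move=> c lam1 lam2 mu c0 l10 l12 m0 K1 K2.
    have [_ H] := ind_lam c0 l10 l12 m0 k0 (Kstar_lt1 k0 K1) (Kstar_lt1 k0 K2).
    exact: H.
  - move=> c lam mu1 mu2 c0 l0 m10 m12 K1 K2.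
    apply: (ind_mu c0 l0 m10 m12 k0).
      exact: (Kstar_lt1 k0 K1).
    exact: (Kstar_lt1 k0 K2).
split; [|split].
- move=> c1 c2 lam mu c10 c12 l0 m0 K1 K2.
  apply: (ind_c c10 c12 l0 m0 (ltn0Sn 0)).
    exact: (Kstar_lt1 (ltn0Sn 0) K1).
  exact: (Kstar_lt1 (ltn0Sn 0) K2).
- move=> c lam mu1 mu2 c0 l0 m10 m12 K1 K2.
  apply: (ind_mu c0 l0 m10 m12 (ltn0Sn 0)).
    exact: (Kstar_lt1 (ltn0Sn 0) K1).
  exact: (Kstar_lt1 (ltn0Sn 0) K2).
- by [].
Qed.
End AN.

Unset Implicit Arguments.
Theorem proposition1 (R : realType) (F f : R -> R)
  (hf_pos : forall v, 0 <= v <= 1 -> 0 < f v)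
  (hf_ac : abs_cont_on 0 1 f)
  (hF : forall v, 0 <= v <= 1 ->
          (F v)%:E = (\int[lebesgue_measure]_(t in `[0%R, v]) (f t)%:E)%E)
  (hF1 : F 1 = 1)
  (hJ_incr : forall x y, 0 <= x -> x < y -> y <= 1 -> Jfun F f x < Jfun F f y)
  (hJ0 : Jfun F f 0 < 0) :
  (forall k : nat, (2 <= k)%N ->
     (forall c1 c2 lam mu, 0 < c1 -> c1 < c2 -> 0 < lam -> 0 < mu ->
        (k <= Kstar F f c1 lam mu)%N -> (k <= Kstar F f c2 lam mu)%N ->
        vhat F f c1 lam mu k < vhat F f c2 lam mu k)
  /\ (forall c lam1 lam2 mu, 0 < c -> 0 < lam1 -> lam1 < lam2 -> 0 < mu ->
        (k <= Kstar F f c lam1 mu)%N -> (k <= Kstar F f c lam2 mu)%N ->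
        vhat F f c lam1 mu k < vhat F f c lam2 mu k)
  /\ (forall c lam mu1 mu2, 0 < c -> 0 < lam -> 0 < mu1 -> mu1 < mu2 ->
        (k <= Kstar F f c lam mu1)%N -> (k <= Kstar F f c lam mu2)%N ->
        vhat F f c lam mu2 k < vhat F f c lam mu1 k))
  /\
  ((forall c1 c2 lam mu, 0 < c1 -> c1 < c2 -> 0 < lam -> 0 < mu ->
        (1 <= Kstar F f c1 lam mu)%N -> (1 <= Kstar F f c2 lam mu)%N ->
        vhat F f c1 lam mu 1 < vhat F f c2 lam mu 1)
  /\ (forall c lam mu1 mu2, 0 < c -> 0 < lam -> 0 < mu1 -> mu1 < mu2 ->
        (1 <= Kstar F f c lam mu1)%N -> (1 <= Kstar F f c lam mu2)%N ->
        vhat F f c lam mu2 1 < vhat F f c lam mu1 1)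
  /\ (forall c lam1 lam2 mu, 0 < c -> 0 < lam1 -> 0 < lam2 -> 0 < mu ->
        (1 <= Kstar F f c lam1 mu)%N -> (1 <= Kstar F f c lam2 mu)%N ->
        vhat F f c lam1 mu 1 = vhat F f c lam2 mu 1)).
Proof. by apply: main_result. Qed.
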